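(* Let $\mathcal{H}$ and $\mathcal{H}_{\rm mem}$ be finite-dimensional Hilbert spaces and $U$ a unitary on $\mathcal{H}\otimes\mathcal{H}_{\rm mem}$ generating a memory channel of finite memory depth $\Delta_U=n$. Let $\Xi_1=R_1\otimes\cdots\otimes R_n$ and $\Xi_2=R'_1\otimes\cdots\otimes R'_n$ be product states of $n$ inputs (reset sequences), let $\omega_{12}$ be an arbitrary (possibly correlated) state of two copies of $\mathcal{H}$, and let $\xi$ be any memory state. Feed the memory channel $2n+2$ inputs: inputs $1,\dots,n$ in state $\Xi_1$, inputs $n+2,\dots,2n+1$ in state $\Xi_2$, and inputs $n+1$ and $2n+2$ jointly in state $\omega_{12}$. Then the joint output state of inputs $n+1$ and $2n+2$, $$\mathrm{tr}_{\text{all other outputs},\,\rm mem}\big[U_{2n+2}\cdots U_1(\Xi_1\otimes\omega_{12}\otimes\Xi_2\otimes\xi)U_1^\dagger\cdots U_{2n+2}^\dagger\big]$$ (with the factors placed at the appropriate input positions), equals $(\mathcal{E}_{\Xi_1}\otimes\mathcal{E}_{\Xi_2})[\omega_{12}]$, independently of $\xi$, where for a product reset sequence $\Xi$ of $n$ inputs $\mathcal{E}_\Xi[\omega]=\mathrm{tr}_{\rm res,mem}[U_{n+1}\cdots U_1(\Xi\otimes\omega\otimes\xi')U_1^\dagger\cdots U_{n+1}^\dagger]$ for any memory state $\xi'$ (this does not depend on $\xi'$).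
   Context: A memory channel generated by a fixed unitary $U$ on $\mathcal{H}\otimes\mathcal{H}_{\rm mem}$: for $m$ uses, inputs on $\mathcal{H}^{\otimes m}$ and memory initially in state $\xi$ are transformed by $U_m\cdots U_1$, where $U_j$ denotes $U$ acting on the $j$th input and the memory (identity elsewhere), and the memory is then traced out. For uncorrelated inputs $\varrho_1,\varrho_2,\dots$ and initial memory $\xi_1$, the $j$th input undergoes $\mathcal{E}_j[\varrho]=\mathrm{tr}_{\rm mem}[U(\varrho\otimes\xi_j)U^\dagger]$ with $\xi_{j+1}=\mathrm{tr}_{\rm sys}[U(\varrho_j\otimes\xi_j)U^\dagger]$. The memory depth $\Delta_U$ is the smallest integer $\Delta\ge0$ such that for every $m>\Delta$ the channel $\mathcal{E}_m$ is independent of $\xi_1$ and of $\varrho_j$ for $j<m-\Delta$ (for all choices); equivalently, for every memory state and every product sequence of $\Delta$ inputs, the channel on the next input does not depend on the memory state preceding those $\Delta$ inputs. *)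

(* Defs.v *)
From mathcomp Require Import all_boot all_order all_algebra.
From mathcomp Require Import algC.
Set Implicit Arguments. Unset Strict Implicit. Unset Printing Implicit Defensive.
Import Order.TTheory GRing.Theory Num.Theory.
Local Open Scope ring_scope.

(* An operator on the Hilbert space C^T (T a finite type indexing an o.n. basis). *)
Definition Op (T : finType) := T -> T -> algC.

Definition idop (T : finType) : Op T := fun i j => (i == j)%:R.
Definition mulop (T : finType) (A B : Op T) : Op T :=
  fun i j => \sum_(l : T) A i l * B l j.
Definition adjop (T : finType) (A : Op T) : Op T := fun i j => Num.conj (A j i).
Definition traceop (T : finType) (A : Op T) : algC := \sum_(i : T) A i i.

(* positive semidefinite: <v, A v> >= 0 for all v (in algC, 0 <= z forces z real) *)
Definition psd (T : finType) (A : Op T) : Prop :=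
  forall v : T -> algC, 0 <= \sum_(i : T) \sum_(j : T) Num.conj (v i) * A i j * v j.
Definition density (T : finType) (A : Op T) : Prop := psd A /\ traceop A = 1.
Definition unitary (T : finType) (U : Op T) : Prop :=
  mulop (adjop U) U = @idop T /\ mulop U (adjop U) = @idop T.

Definition tensop (S T : finType) (A : Op S) (B : Op T) : Op (S * T)%type :=
  fun X Y => A X.1 Y.1 * B X.2 Y.2.
Definition conjop (T : finType) (W rho : Op T) : Op T :=
  mulop W (mulop rho (adjop W)).

Definition chan (d k : nat) (U : Op ('I_d * 'I_k)%type) (xi : Op 'I_k) (rho : Op 'I_d)
  : Op 'I_d :=
  fun i j => \sum_(a : 'I_k) conjop U (tensop rho xi) (i, a) (j, a).
Definition memstep (d k : nat) (U : Op ('I_d * 'I_k)%type) (xi : Op 'I_k) (rho : Op 'I_d)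
  : Op 'I_k :=
  fun a b => \sum_(i : 'I_d) conjop U (tensop rho xi) (i, a) (i, b).
Definition mem_after (d k : nat) (U : Op ('I_d * 'I_k)%type) (xi : Op 'I_k)
  (rs : seq (Op 'I_d)) : Op 'I_k :=
  foldl (memstep U) xi rs.

Definition depth_le (d k : nat) (U : Op ('I_d * 'I_k)%type) (D : nat) : Prop :=
  forall (R : 'I_D -> Op 'I_d) (xi xi' : Op 'I_k) (rho : Op 'I_d),
    (forall i, density (R i)) -> density xi -> density xi' -> density rho ->
    chan U (mem_after U xi [seq R i | i <- enum 'I_D]) rho =
    chan U (mem_after U xi' [seq R i | i <- enum 'I_D]) rho.

Definition memory_depth (d k : nat) (U : Op ('I_d * 'I_k)%type) (n : nat) : Prop :=
  depth_le U n /\ forall D, (D < n)%N -> ~ depth_le U D.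

(* basis of H^{(x) m} (x) H_mem *)
Definition Full (d k m : nat) : finType := ({ffun 'I_m -> 'I_d} * 'I_k)%type.

(* U_j : U acting on the j-th input and the memory, identity elsewhere *)
Definition Ustep (d k m : nat) (U : Op ('I_d * 'I_k)%type) (j : 'I_m) : Op (Full d k m) :=
  fun X Y => U (X.1 j, X.2) (Y.1 j, Y.2) *
             ([forall l : 'I_m, (l != j) ==> (X.1 l == Y.1 l)])%:R.

Definition Wseq (d k m : nat) (U : Op ('I_d * 'I_k)%type) : Op (Full d k m) :=
  foldl (fun acc j => mulop (Ustep U j) acc) (@idop (Full d k m)) (enum 'I_m).

Definition evolve (d k m : nat) (U : Op ('I_d * 'I_k)%type) (rho : Op (Full d k m))
  : Op (Full d k m) := conjop (Wseq U) rho.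

Definition upd (d m : nat) (x : {ffun 'I_m -> 'I_d}) (p : 'I_m) (v : 'I_d)
  : {ffun 'I_m -> 'I_d} := [ffun l => if l == p then v else x l].

(* reduced state of output p (tracing out all other outputs and the memory) *)
Definition out1 (d k m : nat) (p : 'I_m) (rho : Op (Full d k m)) : Op 'I_d :=
  fun i j => \sum_(x : {ffun 'I_m -> 'I_d} | x p == i)
               \sum_(a : 'I_k) rho (x, a) (upd x p j, a).

(* joint reduced state of outputs p and q (p <> q) *)
Definition out2 (d k m : nat) (p q : 'I_m) (rho : Op (Full d k m))
  : Op ('I_d * 'I_d)%type :=
  fun i j => \sum_(x : {ffun 'I_m -> 'I_d} | (x p == i.1) && (x q == i.2))
               \sum_(a : 'I_k) rho (x, a) (upd (upd x p j.1) q j.2, a).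

Definition reset_input (d k n : nat) (R : 'I_n -> Op 'I_d) (om : Op 'I_d)
  (xi : Op 'I_k) : Op (Full d k n.+1) :=
  fun X Y => (\prod_(i < n) R i (X.1 (inord i)) (Y.1 (inord i)))
             * om (X.1 ord_max) (Y.1 ord_max) * xi X.2 Y.2.

(* E_Xi[omega] = tr_{res,mem}[U_{n+1}...U_1 (Xi (x) omega (x) xi') ...^dag]
   (defined for every operator omega; it is linear in omega) *)
Definition EXi (d k n : nat) (U : Op ('I_d * 'I_k)%type) (R : 'I_n -> Op 'I_d)
  (xi : Op 'I_k) (om : Op 'I_d) : Op 'I_d :=
  out1 ord_max (evolve U (reset_input R om xi)).

Definition eunit (d : nat) (i j : 'I_d) : Op 'I_d :=
  fun a b => ((a == i) && (b == j))%:R.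

(* (E1 (x) E2)[omega] for linear maps E1, E2 given on matrix units *)
Definition tensmap (d : nat) (E1 E2 : Op 'I_d -> Op 'I_d) (om : Op ('I_d * 'I_d)%type)
  : Op ('I_d * 'I_d)%type :=
  fun P Q => \sum_(i : 'I_d) \sum_(j : 'I_d) \sum_(i' : 'I_d) \sum_(j' : 'I_d)
      om (i, j) (i', j') * E1 (eunit i i') P.1 Q.1 * E2 (eunit j j') P.2 Q.2.

(* positions (0-based) in 'I_(2n+2): inputs 1..n -> 0..n-1, input n+1 -> n,
   inputs n+2..2n+1 -> n+1..2n, input 2n+2 -> 2n+1 *)
Definition pos1 (n : nat) (i : 'I_n) : 'I_(n + n).+2 := inord i.
Definition posA (n : nat) : 'I_(n + n).+2 := inord n.
Definition pos2 (n : nat) (i : 'I_n) : 'I_(n + n).+2 := inord (n.+1 + i).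
Definition posB (n : nat) : 'I_(n + n).+2 := inord (n + n).+1.

Definition two_input (d k n : nat) (R R' : 'I_n -> Op 'I_d)
  (om : Op ('I_d * 'I_d)%type) (xi : Op 'I_k) : Op (Full d k (n + n).+2) :=
  fun X Y =>
    (\prod_(i < n) R i (X.1 (pos1 i)) (Y.1 (pos1 i)))
    * om (X.1 (posA n), X.1 (posB n)) (Y.1 (posA n), Y.1 (posB n))
    * (\prod_(i < n) R' i (X.1 (pos2 i)) (Y.1 (pos2 i)))
    * xi X.2 Y.2.

(* Main.v *)
Require Import Defs.
From mathcomp Require Import all_boot all_order all_algebra.
From mathcomp Require Import algC.
From mathcomp Require Import ring zify.
From Stdlib Require Import FunctionalExtensionality.
Import Order.TTheory GRing.Theory Num.Theory.
Local Open Scope ring_scope.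

Lemma funext2 (A B C : Type) (f g : A -> B -> C) :
  (forall x y, f x y = g x y) -> f = g.
Proof. by move=> H; apply: functional_extensionality => x;
  apply: functional_extensionality => y. Qed.

Section Ops.
Variable T : finType.
Implicit Types A B C W X : Op T.

Lemma mulopA A B C : mulop A (mulop B C) = mulop (mulop A B) C.
Proof.
apply: funext2 => i j; rewrite /mulop.
under eq_bigr do rewrite big_distrr /=.
rewrite exchange_big /=; apply: eq_bigr => l _.
rewrite big_distrl /=; apply: eq_bigr => l' _; by rewrite mulrA.
Qed.

Lemma adjop_mul A B : adjop (mulop A B) = mulop (adjop B) (adjop A).
Proof.
apply: funext2 => i j; rewrite /adjop /mulop rmorph_sum.
by apply: eq_bigr => l _; rewrite rmorphM mulrC.
Qed.

Lemma conjop_mul B A X : conjop (mulop B A) X = conjop B (conjop A X).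
Proof. by rewrite /conjop adjop_mul !mulopA. Qed.

Lemma mul1op A : mulop (@idop T) A = A.
Proof.
apply: funext2 => i j; rewrite /mulop /idop (bigD1 i) //= eqxx mul1r big1 ?addr0 //.
by move=> l /negbTE; rewrite eq_sym => ->; rewrite mul0r.
Qed.

Lemma mulop1 A : mulop A (@idop T) = A.
Proof.
apply: funext2 => i j; rewrite /mulop /idop (bigD1 j) //= eqxx mulr1 big1 ?addr0 //.
by move=> l /negbTE ->; rewrite mulr0.
Qed.

Lemma adjop1 : adjop (@idop T) = @idop T.
Proof. by apply: funext2 => i j; rewrite /adjop /idop conjC_nat eq_sym. Qed.

Lemma conjop1 X : conjop (@idop T) X = X.
Proof. by rewrite /conjop adjop1 mulop1 mul1op. Qed.

Lemma conjopE W X i j :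
  conjop W X i j = \sum_l \sum_l' W i l * X l l' * (W j l')^*.
Proof.
rewrite /conjop /mulop /adjop; apply: eq_bigr => l _.
by rewrite big_distrr; apply: eq_bigr => l2 _; apply: mulrA.
Qed.

Lemma sum_ind (F : T -> algC) w : \sum_z (z == w)%:R * F z = F w.
Proof.
rewrite (bigD1 w) //= eqxx mul1r big1 ?addr0 //.
by move=> z /negbTE ->; rewrite mul0r.
Qed.
End Ops.

Lemma sum_pair (I J : finType) (F : (I * J)%type -> algC) :
  \sum_l F l = \sum_i \sum_j F (i, j).
Proof. by rewrite pair_bigA; apply: eq_bigr => -[]. Qed.

Lemma sum_lin (I : finType) (z : algC) (F G : I -> algC) :
  \sum_i (z * F i + G i) = z * \sum_i F i + \sum_i G i.
Proof. by rewrite big_split /= mulr_sumr. Qed.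

Lemma conjop_pair (S1 S2 : finType) (W X : Op (S1 * S2)%type) i a j b :
  conjop W X (i, a) (j, b) =
  \sum_t \sum_c \sum_t' \sum_c' W (i, a) (t, c) * X (t, c) (t', c') * (W (j, b) (t', c'))^*.
Proof.
rewrite conjopE sum_pair; apply: eq_bigr => t _; apply: eq_bigr => c _.
by rewrite sum_pair.
Qed.


Section Upd.
Context {d m : nat}.
Implicit Types x y z : {ffun 'I_m -> 'I_d}.

Lemma updE x p v l : upd x p v l = if l == p then v else x l.
Proof. by rewrite /upd ffunE. Qed.

Lemma upd_same x p v : upd x p v p = v.
Proof. by rewrite updE eqxx. Qed.

Lemma upd_other x p v l : l != p -> upd x p v l = x l.
Proof. by rewrite updE => /negbTE ->. Qed.

Lemma upd_upd x p v w : upd (upd x p v) p w = upd x p w.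
Proof. by apply/ffunP => l; rewrite !updE; case: (l == p). Qed.

Lemma upd_comm x p q v w : p != q ->
  upd (upd x p v) q w = upd (upd x q w) p v.
Proof.
move=> pq; apply/ffunP => l; rewrite !updE.
case: (eqVneq l q) => [->|//]; by rewrite eq_sym (negbTE pq).
Qed.

Lemma upd_id x p : upd x p (x p) = x.
Proof. by apply/ffunP => l; rewrite updE; case: eqP => [->|]. Qed.

Lemma sum_agree p x (F : {ffun 'I_m -> 'I_d} -> algC) :
  \sum_(z : {ffun 'I_m -> 'I_d}) ([forall l : 'I_m, (l != p) ==> (x l == z l)])%:R * F z =
  \sum_t F (upd x p t).
Proof.
have E z : ([forall l : 'I_m, (l != p) ==> (x l == z l)])%:R =
           \sum_t (z == upd x p t)%:R :> algC.
  rewrite (bigD1 (z p)) //= big1 ?addr0.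
    congr ((nat_of_bool _)%:R); apply/idP/idP => [/forallP H|/eqP ->].
      apply/eqP/ffunP => l; rewrite updE; case: eqVneq => [->//|lp].
      by apply/esym/eqP; move: (H l); rewrite lp.
    by apply/forallP => l; apply/implyP => lp; rewrite updE (negbTE lp).
  move=> t tz; case: eqP => // zE; move: tz; by rewrite zE upd_same eqxx.
under eq_bigr do rewrite E big_distrl /=.
rewrite exchange_big /=; apply: eq_bigr => t _.
by rewrite sum_ind.
Qed.
End Upd.

Section Chan.
Context {d k m : nat} (U : Op ('I_d * 'I_k)%type).
Local Notation F := (Full d k m).
Local Notation ff := {ffun 'I_m -> 'I_d}.

Definition cj (j : 'I_m) (G : Op F) : Op F := conjop (Ustep U j) G.

Lemma sum_full (H : F -> algC) : \sum_(l : F) H l = \sum_z \sum_c H (z, c).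
Proof. exact: sum_pair. Qed.

Lemma cjE j G (x : ff) a (y : ff) b :
  cj j G (x, a) (y, b) =
  \sum_t \sum_c \sum_t' \sum_c'
     U (x j, a) (t, c) * G (upd x j t, c) (upd y j t', c') * (U (y j, b) (t', c'))^*.
Proof.
rewrite /cj /conjop /mulop /adjop sum_full.
under eq_bigr => z _ do under eq_bigr => c _ do
  rewrite sum_full /Ustep /= (mulrC (U _ _)) -mulrA.
under eq_bigr => z _ do rewrite -big_distrr /=.
rewrite (@sum_agree d m j x (fun z => \sum_c U (x j, a) (z j, c) *
   \sum_z0 \sum_c0 G (z, c) (z0, c0) * (U (y j, b) (z0 j, c0) *
    ([forall l, (l != j) ==> (y l == z0 l)])%:R)^*)).
apply: eq_bigr => t _; apply: eq_bigr => c _; rewrite upd_same.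
transitivity (\sum_(z0 : ff) ([forall l, (l != j) ==> (y l == z0 l)])%:R *
   (\sum_c0 U (x j, a) (t, c) * G (upd x j t, c) (z0, c0) * (U (y j, b) (z0 j, c0))^*)).
  rewrite big_distrr /=; apply: eq_bigr => z0 _.
  rewrite !big_distrr /=; apply: eq_bigr => c0 _.
  rewrite rmorphM rmorph_nat /=; ring.
rewrite (@sum_agree d m j y (fun z0 => \sum_c0 U (x j, a) (t, c) *
  G (upd x j t, c) (z0, c0) * (U (y j, b) (z0 j, c0))^*)).
by apply: eq_bigr => t' _; apply: eq_bigr => c' _; rewrite upd_same.
Qed.
Lemma Wfold s A X : conjop (foldl (fun acc j => mulop (Ustep U j) acc) A s) X =
  foldl (fun G j => cj j G) (conjop A X) s.
Proof. by elim: s A => //= j s IH A; rewrite IH conjop_mul. Qed.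
End Chan.


Section Trace.
Context {d k m : nat} (U : Op ('I_d * 'I_k)%type).
Local Notation F := (Full d k m).
Local Notation ff := {ffun 'I_m -> 'I_d}.

Definition trc (j : 'I_m) (G : Op F) : Op F :=
  fun X Y => \sum_t G (upd X.1 j t, X.2) (upd Y.1 j t, Y.2).

Lemma trc_comm l j G : trc l (trc j G) = trc j (trc l G).
Proof.
apply: funext2 => -[x a] [y b]; rewrite /trc /=.
case: (eqVneq l j) => [->//|lj].
rewrite exchange_big; apply: eq_bigr => t _; apply: eq_bigr => s _.
by rewrite !(upd_comm _ _ _ _ _ lj).
Qed.

Lemma trc_cj l j G : l != j -> trc l (cj U j G) = cj U j (trc l G).
Proof.
move=> lj; have jl : j != l by rewrite eq_sym.
apply: funext2 => -[x a] [y b]; rewrite /trc /= cjE.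
under eq_bigr => s _ do rewrite cjE.
rewrite exchange_big; apply: eq_bigr => t _.
rewrite exchange_big; apply: eq_bigr => c _.
rewrite exchange_big; apply: eq_bigr => t' _.
rewrite exchange_big; apply: eq_bigr => c' _.
rewrite mulr_sumr mulr_suml; apply: eq_bigr => s _ /=.
by rewrite !(upd_other _ _ _ _ jl) !(upd_comm _ _ _ _ _ lj).
Qed.

Definition ign (j : 'I_m) (K : Op F) :=
  forall (x y : ff) a b s s', K (upd x j s, a) (upd y j s', b) = K (x, a) (y, b).
Definition ignf (j : 'I_m) (P : ff -> ff -> algC) :=
  forall (x y : ff) s s', P (upd x j s) (upd y j s') = P x y.

Definition mstepK (rho : Op 'I_d) (K : Op F) : Op F :=
  fun X Y => memstep U (fun c c' => K (X.1, c) (Y.1, c')) rho X.2 Y.2.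

Lemma memstepE xi rho a b : memstep U xi rho a b =
  \sum_s \sum_t \sum_c \sum_t' \sum_c'
    U (s, a) (t, c) * (rho t t' * xi c c') * (U (s, b) (t', c'))^*.
Proof. by rewrite /memstep; apply: eq_bigr => s _; rewrite conjop_pair. Qed.

Lemma chanE xi rho i j : chan U xi rho i j =
  \sum_a \sum_t \sum_c \sum_t' \sum_c'
    U (i, a) (t, c) * (rho t t' * xi c c') * (U (j, a) (t', c'))^*.
Proof. by rewrite /chan; apply: eq_bigr => a _; rewrite conjop_pair. Qed.

Lemma step_trace j rho (P : ff -> ff -> algC) K : ignf j P -> ign j K ->
  trc j (cj U j (fun X Y => rho (X.1 j) (Y.1 j) * P X.1 Y.1 * K X Y)) =
  fun X Y => P X.1 Y.1 * mstepK rho K X Y.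
Proof.
move=> hP hK; apply: funext2 => -[x a] [y b].
rewrite /trc /mstepK /= memstepE mulr_sumr; apply: eq_bigr => s _.
rewrite cjE mulr_sumr; apply: eq_bigr => t _.
rewrite mulr_sumr; apply: eq_bigr => c _.
rewrite mulr_sumr; apply: eq_bigr => t' _.
rewrite mulr_sumr; apply: eq_bigr => c' _ /=.
rewrite !upd_upd !upd_same hP hK; ring.
Qed.

Lemma step_keep j (P : ff -> ff -> algC) K : ignf j P ->
  cj U j (fun X Y => P X.1 Y.1 * K X Y) = fun X Y => P X.1 Y.1 * cj U j K X Y.
Proof.
move=> hP; apply: funext2 => -[x a] [y b].
rewrite !cjE mulr_sumr; apply: eq_bigr => t _.
rewrite mulr_sumr; apply: eq_bigr => c _.
rewrite mulr_sumr; apply: eq_bigr => t' _.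
rewrite mulr_sumr; apply: eq_bigr => c' _ /=.
rewrite hP; ring.
Qed.

Lemma ign_mstepK l rho K : ign l K -> ign l (mstepK rho K).
Proof.
move=> h x y a b s s'; rewrite /mstepK /=.
have -> : (fun c c' => K (upd x l s, c) (upd y l s', c')) = (fun c c' => K (x, c) (y, c')).
  by apply: funext2 => c c'; exact: h.
by [].
Qed.

Lemma ign_cj l j K : l != j -> ign l K -> ign l (cj U j K).
Proof.
move=> lj h x y a b s s'; have jl : j != l by rewrite eq_sym.
rewrite !cjE !(upd_other _ _ _ _ jl).
apply: eq_bigr => t _; apply: eq_bigr => c _; apply: eq_bigr => t' _;
  apply: eq_bigr => c' _.
by rewrite !(upd_comm _ _ _ _ _ lj) h.
Qed.

Definition trcs (L : seq 'I_m) (G : Op F) := foldr trc G L.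

Lemma trcs_trc L j G : trcs L (trc j G) = trc j (trcs L G).
Proof. by elim: L => //= l L ->; rewrite trc_comm. Qed.

Lemma trcs_cj L j G : j \notin L -> trcs L (cj U j G) = cj U j (trcs L G).
Proof.
elim: L => //= l L IH; rewrite in_cons negb_or => /andP[jl jL].
by rewrite IH // trc_cj // eq_sym.
Qed.

Definition fstep (keep : pred 'I_m) (G : Op F) (j : 'I_m) :=
  if keep j then cj U j G else trc j (cj U j G).

Lemma trcs_fold (keep : pred 'I_m) s X : uniq s ->
  trcs [seq l <- s | ~~ keep l] (foldl (fun G j => cj U j G) X s) =
  foldl (fstep keep) X s.
Proof.
elim/last_ind: s => [//|s j IH]; rewrite rcons_uniq => /andP[js us].
have jL : j \notin [seq l <- s | ~~ keep l] by rewrite mem_filter (negbTE js) andbF.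
rewrite !foldl_rcons filter_rcons /fstep; case: (keep j) => /=.
  by rewrite trcs_cj ?IH.
by rewrite /trcs foldr_rcons -/(trcs _ _) trcs_trc trcs_cj ?IH.
Qed.

Definition mrg (L : seq 'I_m) (z y : ff) : ff :=
  [ffun l => if l \in L then z l else y l].

Lemma trcsE L G (x : ff) a (y : ff) b : uniq L ->
  trcs L G (x, a) (y, b) =
  \sum_(z : ff | [forall l, (l \notin L) ==> (z l == x l)]) G (z, a) (mrg L z y, b).
Proof.
elim: L x y => [|j L IH] x y /=.
  move=> _; rewrite (big_pred1 x).
    by congr (G _ (_, b)); apply/ffunP => l; rewrite ffunE.
  move=> z /=; apply/forallP/eqP => [H|->].
    by apply/ffunP => l; apply/eqP; exact: (H l).
  by [].
move=> /andP[jL uL]; rewrite /trc /=.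
under eq_bigr => t _ do rewrite IH //.
rewrite (partition_big (fun z : ff => z j) xpredT) //=.
apply: eq_bigr => t _; apply: eq_big => [z|z].
  apply/idP/idP.
    move/forallP => H; apply/andP; split.
      apply/forallP => l; apply/implyP; rewrite in_cons negb_or => /andP[lj lL].
      by move/implyP: (H l) => /(_ lL); rewrite upd_other.
    by move/implyP: (H j) => /(_ jL); rewrite upd_same.
  case/andP => /forallP H /eqP zj; apply/forallP => l; apply/implyP => lL.
  rewrite updE; case: (eqVneq l j) => [->|lj]; first by rewrite zj.
  by move/implyP: (H l); rewrite in_cons negb_or lj lL; apply.
move=> /forallP H; have zj : z j = t by move/implyP: (H j) => /(_ jL); rewrite upd_same => /eqP.
 congr (G _ (_, b)); apply/ffunP => l.
rewrite /mrg !ffunE in_cons; case: (eqVneq l j) => [->|lj] /=.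
  by rewrite (negbTE jL) zj.
by [].
Qed.

Lemma out1E p G i j : out1 p G i j =
  \sum_a trcs [seq l <- enum 'I_m | ~~ pred1 p l] G ([ffun => i], a) ([ffun => j], a).
Proof.
rewrite /out1 exchange_big /=; apply: eq_bigr => a _.
rewrite trcsE; last exact: filter_uniq (enum_uniq _).
apply: eq_big => [x|x /eqP xp].
  rewrite /=; apply/eqP/forallP => [<- l|H].
    apply/implyP; rewrite mem_filter mem_enum andbT negbK ffunE => /eqP ->.
    by [].
  move/implyP: (H p); rewrite mem_filter mem_enum andbT negbK eqxx ffunE.
  by move=> /(_ isT) /eqP.
congr (G _ (_, a)); apply/ffunP => l.
rewrite updE !ffunE mem_filter mem_enum andbT /=.
by case: (l == p).
Qed.

Lemma out2E p q G I J : p != q -> out2 p q G I J =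
  \sum_a trcs [seq l <- enum 'I_m | ~~ [pred l | (l == p) || (l == q)] l] G
    ([ffun l => if l == p then I.1 else I.2], a)
    ([ffun l => if l == p then J.1 else J.2], a).
Proof.
move=> pq; have qp : q != p by rewrite eq_sym.
rewrite /out2 exchange_big /=; apply: eq_bigr => a _.
rewrite trcsE; last exact: filter_uniq (enum_uniq _).
apply: eq_big => [x|x /andP[/eqP xp /eqP xq]].
  rewrite /=; apply/andP/forallP => [[/eqP xp /eqP xq] l|H].
    apply/implyP; rewrite mem_filter mem_enum andbT negbK ffunE.
    by case/orP => /eqP ->; rewrite ?eqxx ?(negbTE qp) ?xp ?xq.
  have pL : p \notin [seq l <- enum 'I_m | ~~ [pred l | (l == p) || (l == q)] l].
    by rewrite mem_filter /= eqxx.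
  have qL : q \notin [seq l <- enum 'I_m | ~~ [pred l | (l == p) || (l == q)] l].
    by rewrite mem_filter /= eqxx orbT.
  move: (implyP (H p) pL) (implyP (H q) qL); rewrite !ffunE eqxx (negbTE qp).
  by move=> /eqP -> /eqP ->.
congr (G _ (_, a)); apply/ffunP => l.
rewrite !updE !ffunE mem_filter mem_enum andbT /=.
case: (eqVneq l q) => [->|lq]; first by rewrite (negbTE qp) orbT.
by case: (eqVneq l p) => [->|lp].
Qed.

Lemma evolveE X : evolve U X = foldl (fun G j => cj U j G) X (enum 'I_m).
Proof. by rewrite /evolve /Wseq Wfold conjop1. Qed.
End Trace.


Definition linop {S T : finType} (h : Op S -> Op T) :=
  forall (z : algC) (A B : Op S),
    h (fun i j => z * A i j + B i j) = fun i j => z * h A i j + h B i j.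

Section Lin.
Context {S T V : finType}.

Lemma linop0 (h : Op S -> Op T) : linop h -> h (fun _ _ => 0) = fun _ _ => 0.
Proof.
move=> H; have := H 1 (fun _ _ => 0) (fun _ _ => 0).
have -> : (fun (i j : S) => 1 * (0 : algC) + 0) = fun _ _ => 0.
  by apply: funext2 => *; rewrite mul1r addr0.
move=> E; apply: funext2 => i j; have := congr1 (fun f => f i j) E => /=.
by rewrite mul1r -{1}[h _ i j]addr0 => /addrI <-.
Qed.

Lemma linop_scale (h : Op S -> Op T) z A : linop h ->
  h (fun i j => z * A i j) = fun i j => z * h A i j.
Proof.
move=> H; have := H z A (fun _ _ => 0); rewrite linop0 //.
have -> : (fun i j => z * A i j + 0) = fun i j => z * A i j.
  by apply: funext2 => *; rewrite addr0.
move=> ->; by apply: funext2 => *; rewrite addr0.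
Qed.

Lemma linop_sum (h : Op S -> Op T) (I : Type) (r : seq I) (z : I -> algC) F :
  linop h -> h (fun i j => \sum_(l <- r) z l * F l i j) =
  fun i j => \sum_(l <- r) z l * h (F l) i j.
Proof.
move=> H; elim: r => [|l r IH].
  have -> : (fun i j => \sum_(l <- [::]) z l * F l i j) = fun _ _ => 0.
    by apply: funext2 => *; rewrite big_nil.
  by rewrite linop0 //; apply: funext2 => *; rewrite big_nil.
have -> : (fun i j => \sum_(l0 <- l :: r) z l0 * F l0 i j) =
          fun i j => z l * F l i j + \sum_(l0 <- r) z l0 * F l0 i j.
  by apply: funext2 => *; rewrite big_cons.
by rewrite H IH; apply: funext2 => *; rewrite big_cons.
Qed.

Lemma linop_comp (h1 : Op S -> Op T) (h2 : Op T -> Op V) :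
  linop h1 -> linop h2 -> linop (fun A => h2 (h1 A)).
Proof. by move=> H1 H2 z A B /=; rewrite H1 H2. Qed.

Lemma linop_id : linop (fun A : Op S => A).
Proof. by []. Qed.

Lemma linop_mulopL (C : Op S) : linop (fun A => mulop A C).
Proof.
move=> z A B; apply: funext2 => i j; rewrite /mulop mulr_sumr -big_split.
by apply: eq_bigr => l _ /=; ring.
Qed.

Lemma linop_mulopR (W : Op S) : linop (fun A => mulop W A).
Proof.
move=> z A B; apply: funext2 => i j; rewrite /mulop mulr_sumr -big_split.
by apply: eq_bigr => l _ /=; ring.
Qed.

Lemma linop_trconst (C : Op T) : linop (fun A : Op S => fun i j => traceop A * C i j).
Proof.
move=> z A B; apply: funext2 => i j; rewrite /traceop.
have -> : \sum_i0 (z * A i0 i0 + B i0 i0) = z * \sum_i0 A i0 i0 + \sum_i0 B i0 i0.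
  by rewrite big_split /= mulr_sumr.
ring.
Qed.

Lemma linop_cscale (c : algC) : linop (fun A : Op S => fun i j => c * A i j).
Proof. by move=> z A B; apply: funext2 => i j; ring. Qed.
End Lin.
Arguments linop_comp {S T V h1 h2}.

Lemma linop_conjop {S : finType} (W : Op S) : linop (fun A => conjop W A).
Proof. exact: (linop_comp (linop_mulopL (adjop W)) (linop_mulopR W)). Qed.


Section LinTens.
Context {S T : finType}.
Lemma linop_tensR (rho : Op S) : linop (fun xi : Op T => tensop rho xi).
Proof. by move=> z A B; apply: funext2 => X Y; rewrite /tensop; ring. Qed.
Lemma linop_tensL (xi : Op T) : linop (fun rho : Op S => tensop rho xi).
Proof. by move=> z A B; apply: funext2 => X Y; rewrite /tensop; ring. Qed.
Lemma linop_ptr2 : linop (fun (G : Op (S * T)%type) => fun (a b : T) => \sum_i G (i, a) (i, b)).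
Proof.
by move=> z A B; apply: funext2 => a b; rewrite big_split /= mulr_sumr.
Qed.
Lemma linop_ptr1 : linop (fun (G : Op (S * T)%type) => fun (i j : S) => \sum_a G (i, a) (j, a)).
Proof.
by move=> z A B; apply: funext2 => a b; rewrite big_split /= mulr_sumr.
Qed.
End LinTens.

Section LinChan.
Context {d k : nat} (U : Op ('I_d * 'I_k)%type).

Lemma linop_memstep rho : linop (fun xi => memstep U xi rho).
Proof.
exact: (linop_comp (linop_comp (linop_tensR rho) (linop_conjop U)) linop_ptr2).
Qed.

Lemma linop_chanM rho : linop (fun xi => chan U xi rho).
Proof.
exact: (linop_comp (linop_comp (linop_tensR rho) (linop_conjop U)) linop_ptr1).
Qed.

Lemma linop_chanR xi : linop (fun rho => chan U xi rho).
Proof.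
exact: (linop_comp (linop_comp (linop_tensL xi) (linop_conjop U)) linop_ptr1).
Qed.

Lemma linop_fold rs : linop (fun xi => foldl (memstep U) xi rs).
Proof.
elim: rs => [|r rs IH] /=; first exact: linop_id.
exact: (linop_comp (linop_memstep r) IH).
Qed.
End LinChan.


Section Dens.
Context {T : finType}.

Definition rank1 (w : T -> algC) : Op T := fun i j => w i * (w j)^*.

Lemma psd_rank1 w : psd (rank1 w).
Proof.
move=> v; set s := \sum_i (v i)^* * w i.
have -> : \sum_i \sum_j (v i)^* * rank1 w i j * v j = s * s^*.
  rewrite /s rmorph_sum mulr_suml; apply: eq_bigr => i _.
  rewrite mulr_sumr; apply: eq_bigr => j _.
  by rewrite rmorphM /= conjCK /rank1; ring.
exact: mul_conjC_ge0.
Qed.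

Lemma psd_scale (r : algC) (A : Op T) : 0 <= r -> psd A -> psd (fun i j : T => r * A i j).
Proof.
move=> r0 hA v.
have -> : \sum_i \sum_j (v i)^* * (r * A i j) * v j =
          r * \sum_i \sum_j (v i)^* * A i j * v j.
  rewrite mulr_sumr; apply: eq_bigr => i _; rewrite mulr_sumr.
  by apply: eq_bigr => j _; ring.
exact: mulr_ge0.
Qed.

Lemma sum2 (a b : T) (F : T -> algC) : a != b ->
  (forall i, i != a -> i != b -> F i = 0) -> \sum_i F i = F a + F b.
Proof.
move=> ab H; rewrite (bigD1 a) //= (bigD1 b) /=; last by rewrite eq_sym.
rewrite big1 ?addr0 // => i /andP[ia ib]; exact: H.
Qed.

Lemma sum1 (a : T) (F : T -> algC) :
  (forall i, i != a -> F i = 0) -> \sum_i F i = F a.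
Proof.
move=> H; rewrite (bigD1 a) //= big1 ?addr0 // => i; exact: H.
Qed.

End Dens.

Section Dens2.
Context {k : nat}.
Implicit Types a b i j : 'I_k.

Lemma eunit_rank1 a : eunit a a = rank1 (fun i => (i == a)%:R).
Proof.
apply: funext2 => i j; rewrite /eunit /rank1 rmorph_nat -natrM.
by rewrite mulnb.
Qed.

Lemma dens_eunit a : density (eunit a a).
Proof.
split; first by rewrite eunit_rank1; exact: psd_rank1.
rewrite /traceop (sum1 a) /eunit ?eqxx // => i /negbTE ->; by [].
Qed.

Definition Pab a b : Op 'I_k :=
  fun i j => 2^-1 * rank1 (fun l => (l == a)%:R + (l == b)%:R) i j.
Definition Qab a b : Op 'I_k :=
  fun i j => 2^-1 * rank1 (fun l => (l == a)%:R + 'i * (l == b)%:R) i j.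

Lemma two_neq0 : (2 : algC) != 0. Proof. by rewrite pnatr_eq0. Qed.
Lemma half2 : 2^-1 + 2^-1 = 1 :> algC.
Proof. by field. Qed.

Lemma dens_P a b : a != b -> density (Pab a b).
Proof.
move=> ab; have ba : b != a by rewrite eq_sym.
split; first by apply: psd_scale; [rewrite invr_ge0 ler0n | exact: psd_rank1].
rewrite /traceop (sum2 a b _ ab).
  rewrite /Pab /rank1 !eqxx (negbTE ab) (negbTE ba) /= !rmorphD !rmorph_nat.
  by rewrite !addr0 !add0r !mulr1 half2.
move=> i /negbTE ia /negbTE ib; by rewrite /Pab /rank1 ia ib addr0 mul0r mulr0.
Qed.

Lemma dens_Q a b : a != b -> density (Qab a b).
Proof.
move=> ab; have ba : b != a by rewrite eq_sym.
split; first by apply: psd_scale; [rewrite invr_ge0 ler0n | exact: psd_rank1].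
rewrite /traceop (sum2 a b _ ab).
  rewrite /Qab /rank1 !eqxx (negbTE ab) (negbTE ba) /= !rmorphD !rmorphM !rmorph_nat /= conjCi.
  by rewrite !mulr0 !addr0 !add0r !mulr1 mulrN -expr2 sqrCi opprK mulr1 half2.
move=> i /negbTE ia /negbTE ib; by rewrite /Qab /rank1 ia ib mulr0 addr0 mul0r mulr0.
Qed.

Lemma eunit_decomp a b : a != b ->
  eunit a b = fun i j => \sum_(l <- [:: (1, Pab a b); ('i, Qab a b);
       (- (1 + 'i) / 2, eunit a a); (- (1 + 'i) / 2, eunit b b)]) l.1 * l.2 i j.
Proof.
move=> ab; have ba : b != a by rewrite eq_sym.
apply: funext2 => i j; rewrite !big_cons big_nil /= /Pab /Qab /rank1 /eunit.
rewrite !rmorphD !rmorphM !rmorph_nat /= conjCi.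
have E : forall x : algC, 'i * (x * - 'i) = x.
  by move=> x; rewrite mulrCA mulrN -expr2 sqrCi opprK mulr1.
have E2 : 'i * - 'i = 1 :> algC by rewrite mulrN -expr2 sqrCi opprK.
have E3 : forall x : algC, 'i * (x * 'i) = - x.
  by move=> x; rewrite mulrCA -expr2 sqrCi mulrN1.
case: (eqVneq i a) => [->|ia]; case: (eqVneq j a) => [->|ja];
case: (eqVneq i b) => [ib|ib]; case: (eqVneq j b) => [jb|jb];
  rewrite ?eqxx ?(negbTE ab) ?(negbTE ba) ?(negbTE ia) ?(negbTE ja)
    ?(negbTE ib) ?(negbTE jb) //=.
all: rewrite ?mulr0 ?mul0r ?addr0 ?add0r ?mulr1 ?mul1r ?E2 ?E ?E3 ?mulr1.
all: by field.
Qed.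
End Dens2.

Section Span.
Context {k : nat}.

Lemma op_decomp (A : Op 'I_k) :
  A = fun i j => \sum_(p : 'I_k * 'I_k) A p.1 p.2 * eunit p.1 p.2 i j.
Proof.
apply: funext2 => i j; rewrite sum_pair.
rewrite (sum1 i); last first.
  move=> a ai; apply: big1 => b _; by rewrite /eunit eq_sym (negbTE ai) mulr0.
rewrite (sum1 j); last first.
  move=> b bj; by rewrite /eunit eqxx eq_sym (negbTE bj) mulr0.
by rewrite /eunit !eqxx mulr1.
Qed.

Lemma span_eq {S : finType} (h1 h2 : Op 'I_k -> Op S) :
  linop h1 -> linop h2 -> (forall D, density D -> h1 D = h2 D) ->
  forall A, h1 A = h2 A.
Proof.
move=> H1 H2 HD A.
have Ee a b : h1 (eunit a b) = h2 (eunit a b).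
  case: (eqVneq a b) => [<-|ab]; first by apply: HD; exact: dens_eunit.
  rewrite (eunit_decomp _ _ ab) !linop_sum //; apply: funext2 => i j.
  rewrite !big_cons !big_nil /= (HD _ (dens_P _ _ ab)) (HD _ (dens_Q _ _ ab)).
  by rewrite (HD _ (dens_eunit a)) (HD _ (dens_eunit b)).
rewrite (op_decomp A) !linop_sum //; apply: funext2 => i j.
by apply: eq_bigr => p _; rewrite Ee.
Qed.
End Span.
Arguments span_eq {k S h1 h2}.

Lemma depth_ext {d k n : nat} (U : Op ('I_d * 'I_k)%type) (R : 'I_n -> Op 'I_d)
  (xi0 : Op 'I_k) :
  depth_le U n -> (forall i, density (R i)) -> density xi0 ->
  forall N rho, chan U (mem_after U N [seq R i | i <- enum 'I_n]) rho =
   fun i j => traceop N * chan U (mem_after U xi0 [seq R i | i <- enum 'I_n]) rho i j.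
Proof.
move=> hD hR h0.
set rs := [seq R i | i <- enum 'I_n].
have linN rho : linop (fun N => chan U (mem_after U N rs) rho).
  exact: (linop_comp (linop_fold U rs) (linop_chanM U rho)).
have step1 rho : density rho -> forall N,
    chan U (mem_after U N rs) rho =
    fun i j => traceop N * chan U (mem_after U xi0 rs) rho i j.
  move=> hr; apply: (span_eq (linN rho) (linop_trconst _)) => D hDD.
  rewrite (hD R D xi0 rho) //; case: hDD => _ ->.
  by apply: funext2 => i j; rewrite mul1r.
move=> N; apply: span_eq.
- exact: linop_chanR.
- exact: (linop_comp (linop_chanR U _) (linop_cscale _)).
- by move=> D hDD; rewrite (step1 D hDD N).
Qed.


Section Gen.
Context {d k m : nat} (U : Op ('I_d * 'I_k)%type).
Local Notation F := (Full d k m).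
Local Notation ff := {ffun 'I_m -> 'I_d}.

Lemma fold_trace (keep : pred 'I_m) (I : eqType) (pos : I -> 'I_m)
  (rho : I -> Op 'I_d) (s : seq I) (P0 : ff -> ff -> algC) (K : Op F) :
  uniq (map pos s) -> (forall i, i \in s -> ~~ keep (pos i)) ->
  (forall i, i \in s -> ignf (pos i) P0) -> (forall i, i \in s -> ign (pos i) K) ->
  foldl (fstep U keep)
    (fun X Y => (\prod_(i <- s) rho i (X.1 (pos i)) (Y.1 (pos i))) * P0 X.1 Y.1 * K X Y)
    (map pos s)
  = fun X Y => P0 X.1 Y.1 * foldl (fun K i => mstepK U (rho i) K) K s X Y.
Proof.
elim: s K => [|i s IH] K /=.
  by move=> *; apply: funext2 => X Y; rewrite big_nil mul1r.
move=> /andP[pis us] hk hP hK.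
pose P' := fun x y : ff => (\prod_(i0 <- s) rho i0 (x (pos i0)) (y (pos i0))) * P0 x y.
have hP' : ignf (pos i) P'.
  move=> x y t t'; rewrite /P' (hP i (mem_head _ _)); congr (_ * _).
  rewrite big_seq [RHS]big_seq; apply: eq_bigr => i0 i0s.
  have ne : pos i0 != pos i by apply: contraNneq pis => <-; exact: map_f.
  by rewrite !(upd_other _ _ _ _ ne).
have -> : fstep U keep
    (fun X Y => (\prod_(i0 <- i :: s) rho i0 (X.1 (pos i0)) (Y.1 (pos i0))) * P0 X.1 Y.1 * K X Y)
    (pos i) = fun X Y => P' X.1 Y.1 * mstepK U (rho i) K X Y.
  rewrite /fstep (negbTE (hk i (mem_head _ _))).
  rewrite -(step_trace U (pos i) (rho i) P' K hP' (hK i (mem_head _ _))).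
  congr (trc _ (cj U _ _)); apply: funext2 => X Y.
  by rewrite big_cons /P' !mulrA.
apply: (IH (mstepK U (rho i) K)) => //.
- by move=> i0 i0s; apply: hk; rewrite in_cons i0s orbT.
- by move=> i0 i0s; apply: hP; rewrite in_cons i0s orbT.
- by move=> i0 i0s; apply: ign_mstepK; apply: hK; rewrite in_cons i0s orbT.
Qed.

Lemma fold_mstepK (I : Type) (rho : I -> Op 'I_d) s K (x : ff) a (y : ff) b :
  foldl (fun K i => mstepK U (rho i) K) K s (x, a) (y, b) =
  foldl (fun M i => memstep U M (rho i)) (fun c c' => K (x, c) (y, c')) s a b.
Proof. by elim: s K => //= i s IH K; rewrite IH. Qed.

Lemma linop_fold2 (I : Type) (rho : I -> Op 'I_d) s :
  linop (fun xi => foldl (fun M i => memstep U M (rho i)) xi s).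
Proof.
elim: s => [|r rs IH] /=; first exact: linop_id.
exact: (linop_comp (linop_memstep U (rho r)) IH).
Qed.

Lemma fold_scale (I : Type) (rho : I -> Op 'I_d) s z xi :
  foldl (fun M i => memstep U M (rho i)) (fun c c' => z * xi c c') s =
  fun c c' => z * foldl (fun M i => memstep U M (rho i)) xi s c c'.
Proof. exact: (linop_scale _ z xi (linop_fold2 _ rho s)). Qed.
End Gen.

Section Chan2.
Context {d k : nat} (U : Op ('I_d * 'I_k)%type).

Lemma chan_eunit xi t t' i j : chan U xi (eunit t t') i j =
  \sum_a \sum_c \sum_c' U (i, a) (t, c) * xi c c' * (U (j, a) (t', c'))^*.
Proof.
rewrite chanE; apply: eq_bigr => a _.
rewrite (sum1 t); last first.
  move=> t0 t0t; apply: big1 => c _; apply: big1 => t1 _; apply: big1 => c' _.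
  by rewrite /eunit (negbTE t0t) mul0r mulr0 mul0r.
apply: eq_bigr => c _; rewrite (sum1 t'); last first.
  move=> t1 t1t; apply: big1 => c' _.
  by rewrite /eunit eqxx (negbTE t1t) mul0r mulr0 mul0r.
by apply: eq_bigr => c' _; rewrite /eunit !eqxx mul1r.
Qed.

Lemma chan_lin xi rho i j :
  chan U xi rho i j = \sum_s \sum_s' rho s s' * chan U xi (eunit s s') i j.
Proof.
rewrite {1}(op_decomp rho) (linop_sum _ _ _ _ _ (linop_chanR U xi)) sum_pair.
by [].
Qed.

Lemma collapse (G : 'I_d -> 'I_d -> Op 'I_k) i j :
  \sum_a \sum_t \sum_c \sum_t' \sum_c'
     U (i, a) (t, c) * G t t' c c' * (U (j, a) (t', c'))^* =
  \sum_t \sum_t' chan U (G t t') (eunit t t') i j.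
Proof.
rewrite exchange_big; apply: eq_bigr => t _.
under eq_bigr => a _ do rewrite exchange_big.
rewrite exchange_big; apply: eq_bigr => t' _.
by rewrite chan_eunit.
Qed.
End Chan2.


Lemma foldl_map (T1 T2 R : Type) (f : R -> T2 -> R) (g : T1 -> T2) z s :
  foldl f z (map g s) = foldl (fun z x => f z (g x)) z s.
Proof. by elim: s z => //= x s IH z. Qed.

Section EX.
Context {d k : nat} (U : Op ('I_d * 'I_k)%type).

Lemma EXiE n (R : 'I_n -> Op 'I_d) xi om :
  EXi U R xi om = chan U (mem_after U xi [seq R i | i <- enum 'I_n]) om.
Proof.
pose pos := fun i : 'I_n => (inord i : 'I_n.+1).
have vpos i : val (pos i) = i by rewrite /pos /= (inordK (leqW (ltn_ord i))).
have Een : enum 'I_n.+1 = map pos (enum 'I_n) ++ [:: ord_max].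
  apply: (inj_map val_inj); rewrite map_cat /= val_enum_ord -map_comp.
  rewrite (@eq_map _ _ (val \o pos) val vpos) val_enum_ord.
  by rewrite -addn1 iotaD.
have npos i : pos i != ord_max by rewrite -val_eqE /= vpos neq_ltn ltn_ord.
apply: funext2 => i j.
rewrite /EXi out1E evolveE trcs_fold ?enum_uniq // Een foldl_cat.
pose K0 : Op (Full d k n.+1) := fun X Y => om (X.1 ord_max) (Y.1 ord_max) * xi X.2 Y.2.
have EX : reset_input R om xi = fun X Y =>
    (\prod_(i0 <- enum 'I_n) R i0 (X.1 (pos i0)) (Y.1 (pos i0))) *
    (fun _ _ : {ffun 'I_n.+1 -> 'I_d} => 1) X.1 Y.1 * K0 X Y.
  by apply: funext2 => X Y; rewrite /reset_input /K0 mulr1 mulrA enumT.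
have h1 : uniq (map pos (enum 'I_n)).
  by rewrite map_inj_uniq ?enum_uniq // => a b /(congr1 val); rewrite !vpos => /val_inj.
have h2 : forall a, a \in enum 'I_n -> ~~ pred1 ord_max (pos a).
  by move=> a _; rewrite /= npos.
have h3 : forall a, a \in enum 'I_n ->
   ignf (pos a) (fun _ _ : {ffun 'I_n.+1 -> 'I_d} => 1) by [].
have h4 : forall a, a \in enum 'I_n -> ign (k:=k) (pos a) K0.
  move=> a _ x y c c' s s'; rewrite /K0 /=.
  by rewrite !(upd_other _ _ _ _ (_ : ord_max != pos a)) // eq_sym npos.
rewrite EX (fold_trace U (pred1 ord_max) _ pos R (enum 'I_n) _ K0 h1 h2 h3 h4).
rewrite /= /fstep /= eqxx chanE /mem_after.
apply: eq_bigr => a _; rewrite cjE.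
apply: eq_bigr => t _; apply: eq_bigr => c _; apply: eq_bigr => t' _;
  apply: eq_bigr => c' _.
rewrite mul1r fold_mstepK /K0 /= fold_scale !upd_same !ffunE.
by rewrite (foldl_map _ _ _ (memstep U) R) enumT.
Qed.
End EX.


Lemma ign_fold {d k m : nat} (U : Op ('I_d * 'I_k)%type) (I : Type)
  (rho : I -> Op 'I_d) s (K : Op (Full d k m)) l :
  ign l K -> ign l (foldl (fun K i => mstepK U (rho i) K) K s).
Proof. by elim: s K => //= i s IH K hK; apply: IH; apply: ign_mstepK. Qed.

Section Main.
Context {d k : nat} (U : Op ('I_d * 'I_k)%type) (n : nat).
Local Notation m := (n + n).+2.
Local Notation ff := {ffun 'I_m -> 'I_d}.

Lemma vA : val (posA n) = n.
Proof. by rewrite /posA /= inordK //; lia. Qed.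
Lemma vB : val (posB n) = (n + n).+1.
Proof. by rewrite /posB /= inordK //; lia. Qed.
Lemma v1 (i : 'I_n) : val (pos1 i) = i.
Proof. by rewrite /pos1 /= inordK //; have := ltn_ord i; lia. Qed.
Lemma v2 (i : 'I_n) : val (pos2 i) = (n.+1 + i)%N.
Proof. by rewrite /pos2 /= inordK //; have := ltn_ord i; lia. Qed.

Lemma nAB : posA n != posB n.
Proof. by rewrite -val_eqE /= vA vB; apply/eqP; lia. Qed.
Lemma n1A (i : 'I_n) : pos1 i != posA n.
Proof. by rewrite -val_eqE /= vA v1; apply/eqP; have := ltn_ord i; lia. Qed.
Lemma n1B (i : 'I_n) : pos1 i != posB n.
Proof. by rewrite -val_eqE /= vB v1; apply/eqP; have := ltn_ord i; lia. Qed.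
Lemma n2A (i : 'I_n) : pos2 i != posA n.
Proof. by rewrite -val_eqE /= vA v2; apply/eqP; lia. Qed.
Lemma n2B (i : 'I_n) : pos2 i != posB n.
Proof. by rewrite -val_eqE /= vB v2; apply/eqP; have := ltn_ord i; lia. Qed.
Lemma n21 (i j : 'I_n) : pos2 i != pos1 j.
Proof. by rewrite -val_eqE /= v1 v2; apply/eqP; have := ltn_ord j; lia. Qed.

Lemma Een2 : enum 'I_m =
  map (@pos1 n) (enum 'I_n) ++ posA n :: (map (@pos2 n) (enum 'I_n) ++ [:: posB n]).
Proof.
apply: (inj_map val_inj); rewrite val_enum_ord map_cat [map _ (_ :: _)]/= map_cat [map _ [:: _]]/=.
rewrite -!map_comp (@eq_map _ _ (val \o @pos1 n) val v1).
rewrite (@eq_map _ _ (val \o @pos2 n) (addn n.+1 \o val) v2).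
rewrite -!enumT map_comp !val_enum_ord vA vB.
have E : iota n.+1 n = map (addn n.+1) (iota 0 n) by rewrite -{1}(addn0 n.+1) iotaDl.
rewrite -E.
have -> : (n+n).+2 = (n + (1 + (n + 1)))%N by lia.
by rewrite iotaD iotaD /= iotaD /= add0n addn1 addSn.
Qed.

Lemma uniq1 : uniq (map (@pos1 n) (enum 'I_n)).
Proof.
by rewrite map_inj_uniq ?enum_uniq // => a b /(congr1 val); rewrite !v1 => /val_inj.
Qed.
Lemma uniq2 : uniq (map (@pos2 n) (enum 'I_n)).
Proof.
rewrite map_inj_uniq ?enum_uniq // => a b /(congr1 val); rewrite !v2.
by move/eqP; rewrite eqn_add2l => /eqP /val_inj.
Qed.
End Main.


Lemma foldl_cons' (T R : Type) (f : R -> T -> R) z x s :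
  foldl f z (x :: s) = foldl f (f z x) s.
Proof. by []. Qed.
Lemma foldl_1 (T R : Type) (f : R -> T -> R) z x : foldl f z [:: x] = f z x.
Proof. by []. Qed.

Theorem theorem1 (d k n : nat) (U : Op ('I_d * 'I_k)%type)
  (R R' : 'I_n -> Op 'I_d) (om : Op ('I_d * 'I_d)%type) (xi xi1 xi2 : Op 'I_k) :
  unitary U ->
  memory_depth U n ->
  (forall i, density (R i)) -> (forall i, density (R' i)) ->
  density om -> density xi -> density xi1 -> density xi2 ->
  out2 (posA n) (posB n) (evolve U (two_input R R' om xi)) =
  tensmap (EXi U R xi1) (EXi U R' xi2) om.
Proof.
move=> _ [hD _] hR hR' _ hxi hxi1 hxi2.
have Eidx : enum 'I_n = index_enum 'I_n by rewrite enumT.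
pose P2 := fun x y : {ffun 'I_(n+n).+2 -> 'I_d} =>
  \prod_(i <- enum 'I_n) R' i (x (pos2 i)) (y (pos2 i)).
pose K0 : Op (Full d k (n+n).+2) := fun X Y =>
  om (X.1 (posA n), X.1 (posB n)) (Y.1 (posA n), Y.1 (posB n)) * xi X.2 Y.2.
pose K1 := foldl (fun K i => mstepK U (R i) K) K0 (enum 'I_n).
have EX : two_input R R' om xi = fun X Y =>
    (\prod_(i <- enum 'I_n) R i (X.1 (pos1 i)) (Y.1 (pos1 i))) * P2 X.1 Y.1 * K0 X Y.
  by apply: funext2 => X Y; rewrite /two_input /P2 /K0 Eidx; ring.
have ign1 : forall i, i \in enum 'I_n -> ign (k:=k) (pos1 i) K0.
  move=> i _ x y a b s s'; rewrite /K0 /=.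
  have hA : posA n != pos1 i by rewrite eq_sym n1A.
  have hB : posB n != pos1 i by rewrite eq_sym n1B.
  by rewrite !(upd_other _ _ _ _ hA) !(upd_other _ _ _ _ hB).
have ign2 : forall i, i \in enum 'I_n -> ign (k:=k) (pos2 i) K0.
  move=> i _ x y a b s s'; rewrite /K0 /=.
  have hA : posA n != pos2 i by rewrite eq_sym n2A.
  have hB : posB n != pos2 i by rewrite eq_sym n2B.
  by rewrite !(upd_other _ _ _ _ hA) !(upd_other _ _ _ _ hB).
have hP2 : forall i, i \in enum 'I_n -> ignf (pos1 i) P2.
  move=> i _ x y s s'; rewrite /P2; apply: eq_bigr => j _.
  by rewrite !(upd_other _ _ _ _ (n21 n j i)).
have hP2A : ignf (posA n) P2.
  move=> x y s s'; rewrite /P2; apply: eq_bigr => j _.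
  by rewrite !(upd_other _ _ _ _ (n2A n j)).
have kp1 : forall i, i \in enum 'I_n ->
    ~~ [pred l | (l == posA n) || (l == posB n)] (pos1 i).
  by move=> i _; rewrite /= (negbTE (n1A n i)) (negbTE (n1B n i)).
have kp2 : forall i, i \in enum 'I_n ->
    ~~ [pred l | (l == posA n) || (l == posB n)] (pos2 i).
  by move=> i _; rewrite /= (negbTE (n2A n i)) (negbTE (n2B n i)).
apply: funext2 => I J.
rewrite out2E ?nAB // evolveE trcs_fold ?enum_uniq //.
rewrite Een2 foldl_cat foldl_cons' foldl_cat foldl_1 EX.
rewrite (fold_trace U _ _ (@pos1 n) R (enum 'I_n) P2 K0 (uniq1 n) kp1 hP2 ign1).
rewrite -/K1.
have Ep : fstep U [pred l | (l == posA n) || (l == posB n)]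
   (fun X Y => P2 X.1 Y.1 * K1 X Y) (posA n) =
   fun X Y => (\prod_(i <- enum 'I_n) R' i (X.1 (pos2 i)) (Y.1 (pos2 i))) *
     (fun _ _ : {ffun 'I_(n+n).+2 -> 'I_d} => 1) X.1 Y.1 * cj U (posA n) K1 X Y.
  rewrite /fstep /= eqxx /= step_keep //.
  by apply: funext2 => X Y; rewrite mulr1.
rewrite Ep.
have ign3 : forall i, i \in enum 'I_n -> ign (k:=k) (pos2 i) (cj U (posA n) K1).
  move=> i hi; apply: ign_cj; first exact: n2A.
  by apply: ign_fold; apply: ign2.
rewrite (fold_trace U _ _ (@pos2 n) R' (enum 'I_n) (fun _ _ => 1) _ (uniq2 n) kp2 _ ign3) //.
rewrite /fstep /= eqxx orbT /=.
pose x0 : {ffun 'I_(n+n).+2 -> 'I_d} := [ffun l => if l == posA n then I.1 else I.2].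
pose y0 : {ffun 'I_(n+n).+2 -> 'I_d} := [ffun l => if l == posA n then J.1 else J.2].
rewrite -/x0 -/y0.
pose Xi1 := [seq R i | i <- enum 'I_n].
pose Xi2 := [seq R' i | i <- enum 'I_n].
pose M1 := foldl (fun M i => memstep U M (R i)) xi (enum 'I_n).
pose N := fun (t t' : 'I_d) (e e' : 'I_k) => \sum_s \sum_g \sum_s' \sum_g'
   U (I.1, e) (s, g) * (om (s, t) (s', t') * M1 g g') * (U (J.1, e') (s', g'))^*.
have nBA : posB n != posA n by rewrite eq_sym nAB.
have HN : forall t t', (fun e e' => cj U (posA n) K1 (upd x0 (posB n) t, e)
     (upd y0 (posB n) t', e')) = N t t'.
  move=> t t'; apply: funext2 => e e'; rewrite cjE /N.
  have hx : upd x0 (posB n) t (posA n) = I.1 by rewrite upd_other ?nAB // ffunE eqxx.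
  have hy : upd y0 (posB n) t' (posA n) = J.1 by rewrite upd_other ?nAB // ffunE eqxx.
  rewrite hx hy.
  apply: eq_bigr => s _; apply: eq_bigr => g _; apply: eq_bigr => s' _;
    apply: eq_bigr => g' _.
  rewrite /K1 fold_mstepK /K0 /= fold_scale -/M1 !upd_same.
  by rewrite !(upd_other _ _ _ _ nBA) !upd_same.
have HG : forall t t', (fun c c' => 1 * foldl (fun K i => mstepK U (R' i) K)
     (cj U (posA n) K1) (enum 'I_n) (upd x0 (posB n) t, c) (upd y0 (posB n) t', c'))
     = mem_after U (N t t') Xi2.
  move=> t t'; apply: funext2 => c c'; rewrite mul1r fold_mstepK HN.
  by rewrite /mem_after /Xi2 (foldl_map _ _ _ (memstep U) R').
have Hc := collapse U (fun t t' c c' => 1 * foldl (fun K i => mstepK U (R' i) K)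
     (cj U (posA n) K1) (enum 'I_n) (upd x0 (posB n) t, c) (upd y0 (posB n) t', c'))
     I.2 J.2.
rewrite /= in Hc.
have x0q : x0 (posB n) = I.2 by rewrite ffunE (negbTE nBA).
have y0q : y0 (posB n) = J.2 by rewrite ffunE (negbTE nBA).
under eq_bigr => a _ do rewrite cjE x0q y0q.
rewrite Hc.
under eq_bigr => t _ do under eq_bigr => t' _ do rewrite HG.
have D2 := depth_ext U R' xi2 hD hR' hxi2.
have D1 := depth_ext U R xi1 hD hR hxi1.
under eq_bigr => t _ do under eq_bigr => t' _ do rewrite D2 /=.
have Hsum : forall t t', traceop (N t t') = \sum_s \sum_s'
    om (s, t) (s', t') * chan U (mem_after U xi1 Xi1) (eunit s s') I.1 J.1.
  move=> t t'.
  transitivity (chan U M1 (fun s s' => om (s, t) (s', t')) I.1 J.1).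
    by rewrite chanE.
  rewrite /M1 -(foldl_map _ _ _ (memstep U) R) -/(mem_after U xi _) D1 /=.
  by case: hxi => _ ->; rewrite mul1r chan_lin.
under eq_bigr => t _ do under eq_bigr => t' _ do rewrite Hsum.
have E1 : EXi U R xi1 = fun o => chan U (mem_after U xi1 Xi1) o.
  by apply: functional_extensionality => o; exact: EXiE.
have E2 : EXi U R' xi2 = fun o => chan U (mem_after U xi2 Xi2) o.
  by apply: functional_extensionality => o; exact: EXiE.
rewrite E1 E2 /tensmap.
rewrite [RHS]exchange_big /=; apply: eq_bigr => t _.
under [RHS]eq_bigr => i _ do rewrite exchange_big.
rewrite [RHS]exchange_big; apply: eq_bigr => t' _.
rewrite mulr_suml; apply: eq_bigr => s _; rewrite mulr_suml; apply: eq_bigr => s' _.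
by [].
Qed.
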